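(* If a topological space $X$ is the union $X=Y\cup Z$ of two subspaces $Y$ and $Z$ which are both $NWD$-separable, then $X$ is $NWD$-separable.
   Context: A space $X$ is $NWD$-separable if for every sequence $\{D_n:n<\omega\}$ of dense subsets of $X$ there are nowhere dense (in $X$) sets $E_n\subseteq D_n$ such that $\bigcup_{n<\omega}E_n$ is dense in $X$. *)

(* Defs.v *)
From HB Require Import structures.
From mathcomp Require Import all_boot all_order all_algebra.
From mathcomp Require Import all_classical all_reals all_analysis.
Set Implicit Arguments. Unset Strict Implicit. Unset Printing Implicit Defensive.
Local Open Scope classical_set_scope.

Definition nowhere_dense (T : topologicalType) (E : set T) : Prop :=
  (closure E)^° = set0.

Definition NWD_separable (T : topologicalType) : Prop :=
  forall D : nat -> set T, (forall n, dense (D n)) ->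
  exists E : nat -> set T,
    (forall n, E n `<=` D n) /\ (forall n, nowhere_dense (E n)) /\
    dense (\bigcup_n E n).

(* Main.v *)
Require Import Defs.
From HB Require Import structures.
From mathcomp Require Import all_boot all_order all_algebra.
From mathcomp Require Import all_classical all_reals all_analysis.
Local Open Scope classical_set_scope.
Set Implicit Arguments. Unset Strict Implicit.

Lemma op_nbhs (T : topologicalType) (O : set T) x : open O -> O x -> nbhs x O.
Proof. by move=> oO Ox; apply: open_nbhs_nbhs. Qed.

Lemma clos_meet (T : topologicalType) (A O : set T) :
  open O -> O `&` closure A !=set0 -> O `&` A !=set0.
Proof.
move=> oO [x [ Ox clx]]; have [y [Ay Oy]] := clx O (op_nbhs oO Ox).
by exists y.
Qed.

Lemma clos_sub_meet (T : topologicalType) (A O : set T) :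
  open O -> O `<=` closure A -> O !=set0 -> O `&` A !=set0.
Proof. move=> oO sO [x Ox]; apply: clos_meet => //; exists x; split=> //; exact: sO. Qed.

Lemma nwd_to (T : topologicalType) (E O : set T) : nowhere_dense E ->
  open O -> O !=set0 ->
  exists Oq, [/\ open Oq, Oq !=set0, Oq `<=` O & Oq `&` E = set0].
Proof.
move=> nE oO [x Ox]; exists (O `&` ~` closure E); split.
- by apply: openI => //; apply: closed_openC; exact: closed_closure.
- apply: contrapT => /set0P/negP; rewrite negbK => /eqP H.
  have : interior (closure E) x.
    apply: (@filterS _ _ _ O); last exact: op_nbhs.
    move=> y Oy; apply: contrapT => ny.
    by have : (O `&` ~` closure E) y by []; rewrite H.
  by rewrite nE.
- by move=> y [].
- apply/seteqP; split=> // y [[_ ncl] Ey]; apply: ncl; exact: subset_closure.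
Qed.

Lemma nwd_from (T : topologicalType) (E : set T) :
  (forall O, open O -> O !=set0 ->
    exists Oq, [/\ open Oq, Oq !=set0, Oq `<=` O & Oq `&` E = set0]) ->
  nowhere_dense E.
Proof.
move=> H; rewrite /nowhere_dense; apply/seteqP; split=> // x ix.
have [ Oq [oOq nOq sOq dOq]] := H _ (@open_interior _ (closure E)) (ex_intro _ x ix).
have := clos_sub_meet oOq (subset_trans sOq (@interior_subset _ _)) nOq.
by rewrite dOq => -[].
Qed.

Lemma nwd_sub (T : topologicalType) (A B : set T) : A `<=` B ->
  nowhere_dense B -> nowhere_dense A.
Proof.
move=> AB nB; apply: nwd_from => O oO nO.
have [ Oq [oOq nOq sOq dOq]] := nwd_to nB oO nO; exists Oq; split=> //.
apply/seteqP; split=> // y [ Oqy Ay]; have : (Oq `&` B) y by split=> //; exact: AB.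
by rewrite dOq.
Qed.

Lemma nwd_union (T : topologicalType) (A B : set T) :
  nowhere_dense A -> nowhere_dense B -> nowhere_dense (A `|` B).
Proof.
move=> nA nB; apply: nwd_from => O oO nO.
have [Ua [oUa nUa sUa dUa]] := nwd_to nA oO nO.
have [Ub [oUb nUb sUb dUb]] := nwd_to nB oUa nUa.
exists Ub; split=> //; first exact: subset_trans sUb sUa.
apply/seteqP; split=> // y [Uby [Ay|By]].
  have : (Ua `&` A) y by split=> //; exact: sUb.
  by rewrite dUa.
have : (Ub `&` B) y by [].
by rewrite dUb.
Qed.

Lemma openY (X : topologicalType) (Y : set X) (U : set (set_type Y)) :
  open U <-> exists O : set X, open O /\ set_val @^-1` O = U.
Proof.
rewrite /open /=; split => [[ O oO e]|[ O [oO e]]]; by exists O.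
Qed.

Lemma openYpre (X : topologicalType) (Y : set X) (O : set X) :
  open O -> open (set_val @^-1` O : set (set_type Y)).
Proof. by move=> oO; apply/openY; exists O. Qed.

Definition mkY (X : Type) (Y : set X) (y : X) (Yy : Y y) : set_type Y :=
  exist _ y (mem_set Yy).

Lemma mkYE (X : Type) (Y : set X) y (Yy : Y y) : set_val (mkY Yy) = y.
Proof. by rewrite set_valE. Qed.

Lemma valY (X : Type) (Y : set X) (s : set_type Y) : Y (set_val s).
Proof. by case: s => y Yy; rewrite set_valE /=; exact: set_mem. Qed.

Lemma nwd_val (X : topologicalType) (Y : set X) (E : set (set_type Y)) :
  nowhere_dense E -> nowhere_dense (set_val @` E).
Proof.
move=> nE; apply: nwd_from => O oO nO.
have [[y [ Oy Yy]]|nOY] := pselect ((O `&` Y) !=set0); last first.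
  exists O; split=> //; apply/seteqP; split=> // z [ Oz [s _ sz]].
  by apply: nOY; exists z; split=> //; rewrite -sz; exact: valY.
have oV := openYpre Y oO.
have nV : (set_val @^-1` O : set (set_type Y)) !=set0 by exists (mkY Yy); rewrite /= mkYE.
have [Vq [oVq nVq sVq dVq]] := nwd_to nE oV nV.
have [W [oW eW]] := (openY Vq).1 oVq.
exists (O `&` W); split.
- exact: openI.
- case: nVq => s Vqs; exists (set_val s); split.
    exact: (sVq _ Vqs).
  by rewrite -eW in Vqs.
- by move=> z [].
- apply/seteqP; split=> // z [[ Oz Wz] [s Es sz]].
  have : (Vq `&` E) s by split=> //; rewrite -eW /= sz.
  by rewrite dVq.
Qed.

Lemma side (X : topologicalType) (S : set X) (hS : NWD_separable (set_type S))
  (D O : nat -> set X) (c : nat -> nat) :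
  (forall n, open (O n)) -> (forall n, O n `<=` closure (D n `&` S)) ->
  exists F : nat -> set X, [/\ forall n, F n `<=` D n,
    forall n, nowhere_dense (F n) &
    forall G, open G -> G `&` S !=set0 ->
      (exists n, G `&` F n !=set0) \/
      (exists m, G `&` ~` closure (\bigcup_(n in [set k | c k = m]) O n) !=set0)].
Proof.
move=> oO hO.
pose U m := \bigcup_(n in [set k | c k = m]) O n.
pose Dm m : set (set_type S) := [set s | (exists n, c n = m /\ D n (set_val s) /\ O n (set_val s))
   \/ ~ closure (U m) (set_val s)].
have dD : forall m, dense (Dm m).
  move=> m V [s Vs] oV; have [W [oW eW]] := (openY V).1 oV.
  have Ws : W (set_val s) by rewrite -eW in Vs.
  have [cl|ncl] := pselect (closure (U m) (set_val s)); last by exists s; split=> //; right.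
  have [x [Wx [n cn Onx]]] : W `&` U m !=set0.
    by have [y [Uy Wy]] := cl W (op_nbhs oW Ws); exists y.
  have [y [[Wy Ony] [Dy Sy]]] := @clos_sub_meet _ (D n `&` S) _ (openI oW (oO n))
     ltac:(by move=> z [_ /hO]) ltac:(by exists x).
  exists (mkY Sy); split; first by rewrite -eW /= mkYE.
  by left; exists n; rewrite mkYE.
have [E [sE [nE dE]]] := hS Dm dD.
exists (fun n => set_val @` E (c n) `&` D n `&` O n); split.
- by move=> n z [[_ ?] _].
- move=> n; apply: nwd_sub (nwd_val (nE (c n))); by move=> z [[? _] _].
- move=> G oG [x [Gx Sx]].
  have oV := openYpre S oG.
  have nV : (set_val @^-1` G : set (set_type S)) !=set0 by exists (mkY Sx); rewrite /= mkYE.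
  have [s [Vs Hm]] := dE _ nV oV. case: Hm => m _ Ems.
  case: (sE m s Ems) => [[n [cn [Dn On]]]|ncl].
    left; exists n; exists (set_val s); split=> //; split=> //; split=> //.
    by exists s => //; rewrite cn.
  by right; exists m; exists (set_val s).
Qed.

Lemma ne0 (T : Type) (A : set T) : ~ (A !=set0) -> A = set0.
Proof. by move=> h; apply/seteqP; split=> // x Ax; apply: h; exists x. Qed.

Lemma open_escape (T : topologicalType) (G C : set T) :
  open G -> open (G `&` ~` closure C).
Proof. by move=> oG; apply: openI => //; apply: closed_openC; exact: closed_closure. Qed.

Unset Implicit Arguments.
Theorem corollary3p16 (X : topologicalType) (Y Z : set X) :
  Y `|` Z = setT ->
  NWD_separable (set_type Y) -> NWD_separable (set_type Z) ->
  NWD_separable X.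
Proof.
move=> YZ hY hZ D dD.
have cov : forall x, Y x \/ Z x by move=> x; have : [set: X] x by []; rewrite -YZ.
pose P n := interior (closure (D n `&` Y)).
pose Q n := ~` closure (P n).
have oP : forall n, open (P n) by move=> n; exact: open_interior.
have oQ : forall n, open (Q n) by move=> n; apply: closed_openC; exact: closed_closure.
have sP : forall n, P n `<=` closure (D n `&` Y) by move=> n; exact: interior_subset.
have key : forall n G, open G -> G `&` P n = set0 -> G `&` Q n = set0 -> G = set0.
  move=> n G oG h1 h2; apply/seteqP; split=> // x Gx.
  have clx : closure (P n) x.
    apply: contrapT => ncl; have : (G `&` Q n) x by [].
    by rewrite h2.
  have [y [Py Gy]] := clx G (op_nbhs oG Gx).
  have : (G `&` P n) y by [].
  by rewrite h1.
have sQ : forall n, Q n `<=` closure (D n `&` Z).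
  move=> n x Qx B Bx.
  pose H := interior B `&` Q n.
  have oH : open H by apply: openI => //; exact: open_interior.
  have Hx : H x by [].
  apply: contrapT => nm.
  have HP : H `<=` closure (D n `&` Y).
    move=> y Hy C Cy.
    pose K := interior C `&` H.
    have oK : open K by apply: openI => //; exact: open_interior.
    have [d [Kd Dd]] := dD n K (ex_intro _ y (conj Cy Hy)) oK.
    have Bd : B d by case: Kd => _ [/interior_subset].
    have Yd : Y d.
      case: (cov d) => // Zd; exfalso; apply: nm; exists d; split; [split|] => //.
    by exists d; split; [split|] => //; case: Kd => /interior_subset.
  have HP' : H `<=` P n.
    move=> w Hw; apply: (filterS HP); exact: op_nbhs oH Hw.
  by apply: Qx; apply: subset_closure; exact: HP'.
pose a n := (odflt (0%N, 0%N) (unpickle n : option (nat * nat))).1.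
pose b n := (odflt (0%N, 0%N) (unpickle n : option (nat * nat))).2.
have ab : forall m m', exists n, a n = m /\ b n = m'.
  by move=> m m'; exists (pickle (m, m')); rewrite /a /b pickleK.
have [FY [sFY nFY hFY]] := @side _ _ hY D P a oP sP.
have [FZ [sFZ nFZ hFZ]] := @side _ _ hZ D Q b oQ sQ.
exists (fun n => FY n `|` FZ n); split; [|split].
- by move=> n x [/sFY|/sFZ].
- by move=> n; apply: nwd_union.
move=> G nG oG; apply: contrapT => nm.
have mY : forall n, ~ (G `&` FY n !=set0).
  by move=> n [x [Gx Fx]]; apply: nm; exists x; split=> //; exists n => //; left.
have mZ : forall n, ~ (G `&` FZ n !=set0).
  by move=> n [x [Gx Fx]]; apply: nm; exists x; split=> //; exists n => //; right.
have escY : forall G', open G' -> G' `<=` G -> G' `&` Y !=set0 ->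
    exists m, G' `&` ~` closure (\bigcup_(n in [set k | a k = m]) P n) !=set0.
  move=> G' oG' sG' h; case: (hFY G' oG' h) => // -[n [x [G'x Fx]]].
  by exfalso; apply: (mY n); exists x; split=> //; exact: sG'.
have escZ : forall G', open G' -> G' `<=` G -> G' `&` Z !=set0 ->
    exists m, G' `&` ~` closure (\bigcup_(n in [set k | b k = m]) Q n) !=set0.
  move=> G' oG' sG' h; case: (hFZ G' oG' h) => // -[n [x [G'x Fx]]].
  by exfalso; apply: (mZ n); exists x; split=> //; exact: sG'.
have subA : forall n m, a n = m -> P n `<=` closure (\bigcup_(k in [set k | a k = m]) P k).
  by move=> n m anm x Px; apply: subset_closure; exists n.
have subB : forall n m, b n = m -> Q n `<=` closure (\bigcup_(k in [set k | b k = m]) Q k).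
  by move=> n m bnm x Qx; apply: subset_closure; exists n.
have [h|h] := pselect (G `&` Y !=set0).
- have [m Hm] := escY G oG (@subset_refl _ _) h.
  set G1 := G `&` ~` closure _ in Hm.
  have oG1 : open G1 by exact: open_escape.
  have [n0 [an0 _]] := ab m 0%N.
  have G1P : G1 `&` P n0 = set0.
    by apply/seteqP; split=> // x [[_ ncl] Px]; apply: ncl; exact: (subA _ _ an0).
  have G1Q : G1 `&` Q n0 !=set0.
    apply: contrapT => h'; have := key n0 G1 oG1 G1P (ne0 h').
    by case: Hm => x G1x e; rewrite e in G1x.
  have G1Z : G1 `&` Z !=set0.
    case: G1Q => x [G1x Qx].
    have [z [G1z [_ Zz]]] := @clos_meet _ (D n0 `&` Z) G1 oG1 (ex_intro _ x (conj G1x (sQ _ _ Qx))).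
    by exists z.
  have [m' Hm'] := escZ G1 oG1 (fun x => fun hx => proj1 hx) G1Z.
  set G2 := G1 `&` ~` closure _ in Hm'.
  have oG2 : open G2 by exact: open_escape.
  have [n [an bn]] := ab m m'.
  have e := key n G2 oG2.
  have e2 : G2 = set0.
    apply: e.
      apply/seteqP; split=> // x [[[_ ncl] _] Px].
      by apply: ncl; exact: (subA _ _ an).
    apply/seteqP; split=> // x [[_ ncl] Qx].
    by apply: ncl; exact: (subB _ _ bn).
  by case: Hm' => x G2x; rewrite e2 in G2x.
- have hZ' : G `&` Z !=set0.
    case: nG => x Gx; case: (cov x) => [Yx|Zx]; last by exists x.
    by exfalso; apply: h; exists x.
  have [m' Hm'] := escZ G oG (@subset_refl _ _) hZ'.
  set G1 := G `&` ~` closure _ in Hm'.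
  have oG1 : open G1 by exact: open_escape.
  have [n [_ bn]] := ab 0%N m'.
  have G1Q : G1 `&` Q n = set0.
    by apply/seteqP; split=> // x [[_ ncl] Qx]; apply: ncl; exact: (subB _ _ bn).
  have G1P : G1 `&` P n !=set0.
    apply: contrapT => h'; have := key n G1 oG1 (ne0 h') G1Q.
    by case: Hm' => x G1x e; rewrite e in G1x.
  case: G1P => x [G1x Px].
  have [y [[Gy _] [_ Yy]]] := @clos_meet _ (D n `&` Y) G1 oG1 (ex_intro _ x (conj G1x (sP _ _ Px))).
  by apply: h; exists y.
Qed.
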